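(* Let $\nu>-1$ be real. Then every zero $a\in\mathbb C\setminus\{0\}$ of $x\mapsto J_\nu(x;q^2)$ is real.
   Context: Fix $0<q<1$. For $a\in\mathbb C$ put $(a;q)_0=1$, $(a;q)_k=\prod_{i=0}^{k-1}(1-aq^i)$, $(a;q)_\infty=\prod_{i\ge0}(1-aq^i)$. For $\nu\in\mathbb C$ and $x\in\mathbb C\setminus\{0\}$ the Hahn–Exton $q$-Bessel function is $$J_\nu(x;q^2)=\frac{x^\nu}{(q^2;q^2)_\infty}\sum_{k=0}^\infty\frac{(-1)^kq^{k(k+1)}(q^{2\nu+2k+2};q^2)_\infty}{(q^2;q^2)_k}\,x^{2k},$$ with $x^\nu=\exp(\nu\operatorname{Log}x)$ (principal branch). Thus the zeros of $J_\nu(\cdot;q^2)$ in $\mathbb C\setminus\{0\}$ are the nonzero zeros of the entire function $x^{-\nu}J_\nu(x;q^2)$. *)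

(* Defs.v *)
From Stdlib Require Import Reals.
From Coquelicot Require Import Coquelicot.
Open Scope R_scope.

Fixpoint qpoch (a q : R) (k : nat) : R :=
  match k with
  | O => 1
  | S k' => qpoch a q k' * (1 - a * q ^ k')
  end.

Definition qpoch_inf (a q : R) : R := real (Lim_seq (fun k => qpoch a q k)).

Fixpoint Cpown (x : C) (n : nat) : C :=
  match n with
  | O => RtoC 1
  | S n' => Cmult (Cpown x n') x
  end.

(* principal argument in (-pi, pi] *)
Definition Arg (x : C) : R :=
  if Rle_dec 0 (Im x) then acos (Re x / Cmod x) else - acos (Re x / Cmod x).

(* principal power x^nu = exp(nu Log x) for real nu and x <> 0:
   exp(nu (ln|x| + i Arg x)) = |x|^nu (cos(nu Arg x) + i sin(nu Arg x)) *)
Definition cpow_real (x : C) (nu : R) : C :=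
  (exp (nu * ln (Cmod x)) * cos (nu * Arg x),
   exp (nu * ln (Cmod x)) * sin (nu * Arg x)).

Definition CSeries (a : nat -> C) : C :=
  (Series (fun k => Re (a k)), Series (fun k => Im (a k))).

Definition HE_coef (q nu : R) (k : nat) : R :=
  (-1) ^ k * q ^ (k * (k + 1)) * qpoch_inf (Rpower q (2 * nu + 2 * INR k + 2)) (q ^ 2)
  / qpoch (q ^ 2) (q ^ 2) k.

Definition HEJ (q nu : R) (x : C) : C :=
  Cmult (Cmult (cpow_real x nu) (RtoC (/ qpoch_inf (q ^ 2) (q ^ 2))))
        (CSeries (fun k => Cmult (RtoC (HE_coef q nu k)) (Cpown x (2 * k)))).

(* Main.v *)
Require Import Defs.
From Stdlib Require Import Reals Lra Lia.
From Coquelicot Require Import Coquelicot.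
Open Scope R_scope.

Lemma pow_le1 (r : R) (n : nat) : 0 <= r <= 1 -> r ^ n <= 1.
Proof. intros H. rewrite <- (pow1 n). apply pow_incr. lra. Qed.

Lemma qpoch_bounds (x r : R) (n : nat) : 0 <= x <= 1 -> 0 <= r <= 1 ->
  0 <= qpoch x r n <= 1.
Proof.
  intros Hx Hr. induction n as [|n IH]; simpl. lra.
  assert (0 <= r ^ n <= 1) by (split; [apply pow_le; lra | apply pow_le1; lra]).
  assert (0 <= x * r ^ n <= 1) by (split; [apply Rmult_le_pos; lra| nra]).
  split; nra.
Qed.

Lemma qpoch_decr (x r : R) (n : nat) : 0 <= x <= 1 -> 0 <= r <= 1 ->
  qpoch x r (S n) <= qpoch x r n.
Proof.
  intros Hx Hr. simpl. pose proof (qpoch_bounds x r n Hx Hr).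
  assert (0 <= r ^ n) by (apply pow_le; lra).
  assert (0 <= x * r ^ n) by (apply Rmult_le_pos; lra). nra.
Qed.

Lemma qpoch_lower (x r : R) (n : nat) : 0 <= x <= 1 -> 0 <= r < 1 ->
  1 - x * (1 - r ^ n) / (1 - r) <= qpoch x r n.
Proof.
  intros Hx Hr. induction n as [|n IH]; simpl.
  - unfold Rdiv. replace (1 - 1) with 0 by ring. rewrite Rmult_0_r, Rmult_0_l. lra.
  - pose proof (qpoch_bounds x r n Hx (conj (proj1 Hr) (Rlt_le _ _ (proj2 Hr)))).
    assert (0 <= r ^ n) by (apply pow_le; lra).
    assert (0 <= x * r ^ n) by (apply Rmult_le_pos; lra).
    assert (E : 1 - x * (1 - r * r ^ n) / (1 - r) = 1 - x * (1 - r ^ n) / (1 - r) - x * r ^ n)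
      by (field; lra).
    rewrite E. nra.
Qed.

Lemma qpoch_pos (x r : R) (n : nat) : 0 <= x < 1 -> 0 <= r <= 1 -> 0 < qpoch x r n.
Proof.
  intros Hx Hr. induction n as [|n IH]; simpl. lra.
  assert (r ^ n <= 1) by (apply pow_le1; lra).
  assert (0 <= r ^ n) by (apply pow_le; lra).
  assert (x * r ^ n < 1) by nra. apply Rmult_lt_0_compat; lra.
Qed.

Lemma qpoch_lim (x r : R) : 0 <= x <= 1 -> 0 <= r <= 1 ->
  is_lim_seq (fun n => qpoch x r n) (qpoch_inf x r).
Proof.
  intros Hx Hr.
  assert (Hf : ex_finite_lim_seq (fun n => qpoch x r n)).
  { apply ex_finite_lim_seq_decr with 0.
    - intros n; apply qpoch_decr; auto.
    - intros n; apply qpoch_bounds; auto. }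
  pose proof (Lim_seq_correct' _ Hf) as H.
  destruct Hf as [l Hl]. rewrite (is_lim_seq_unique _ _ Hl) in H.
  unfold qpoch_inf. rewrite (is_lim_seq_unique _ _ Hl). simpl. exact Hl.
Qed.

Lemma qpoch_inf_ge (x r m : R) : 0 <= x <= 1 -> 0 <= r <= 1 ->
  (forall n, m <= qpoch x r n) -> m <= qpoch_inf x r.
Proof.
  intros Hx Hr Hm. pose proof (qpoch_lim x r Hx Hr) as H.
  assert (Rbar_le m (qpoch_inf x r)).
  { apply (is_lim_seq_le (fun _ => m) (fun n => qpoch x r n)); auto.
    apply is_lim_seq_const. }
  exact H0.
Qed.

Lemma qpoch_inf_le (x r m : R) : 0 <= x <= 1 -> 0 <= r <= 1 ->
  (forall n, qpoch x r n <= m) -> qpoch_inf x r <= m.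
Proof.
  intros Hx Hr Hm. pose proof (qpoch_lim x r Hx Hr) as H.
  assert (Rbar_le (qpoch_inf x r) m).
  { apply (is_lim_seq_le (fun n => qpoch x r n) (fun _ => m)); auto.
    apply is_lim_seq_const. }
  exact H0.
Qed.

Lemma qpoch_shift (x r : R) (n : nat) :
  qpoch x r (S n) = (1 - x) * qpoch (x * r) r n.
Proof.
  induction n as [|n IH].
  - simpl. ring.
  - change (qpoch x r (S (S n))) with (qpoch x r (S n) * (1 - x * r ^ (S n))).
    rewrite IH. simpl. ring.
Qed.

Lemma qpoch_inf_shift (x r : R) : 0 <= x <= 1 -> 0 <= r <= 1 ->
  qpoch_inf x r = (1 - x) * qpoch_inf (x * r) r.
Proof.
  intros Hx Hr.
  assert (Hxr : 0 <= x * r <= 1) by (split; nra).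
  pose proof (qpoch_lim x r Hx Hr) as H1.
  pose proof (qpoch_lim (x*r) r Hxr Hr) as H2.
  assert (H3 : is_lim_seq (fun n => qpoch x r (S n)) ((1 - x) * qpoch_inf (x * r) r)).
  { apply is_lim_seq_ext with (fun n => (1 - x) * qpoch (x * r) r n).
    intros n; rewrite qpoch_shift; auto.
    apply (is_lim_seq_scal_l _ (1 - x) (qpoch_inf (x*r) r)). exact H2. }
  apply is_lim_seq_incr_1 in H1.
  pose proof (is_lim_seq_unique _ _ H1). rewrite (is_lim_seq_unique _ _ H3) in H.
  injection H. auto.
Qed.

Lemma qpoch_inf_bounds (x r : R) : 0 <= x <= 1 -> 0 <= r <= 1 ->
  0 <= qpoch_inf x r <= 1.
Proof.
  intros. split.
  apply qpoch_inf_ge; auto; intros; apply qpoch_bounds; auto.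
  apply qpoch_inf_le; auto; intros; apply qpoch_bounds; auto.
Qed.

Lemma qpoch_inf_split (x r : R) (M : nat) : 0 <= x <= 1 -> 0 <= r <= 1 ->
  qpoch_inf x r = qpoch x r M * qpoch_inf (x * r ^ M) r.
Proof.
  intros Hx Hr. revert x Hx. induction M as [|M IH]; intros x Hx.
  - simpl. rewrite Rmult_1_r. ring.
  - rewrite qpoch_shift. rewrite (qpoch_inf_shift x r Hx Hr).
    assert (Hxr : 0 <= x * r <= 1) by (split; nra).
    rewrite (IH (x * r) Hxr). simpl. replace (x * r * r ^ M) with (x * (r * r ^ M)) by ring. ring.
Qed.

Lemma qpoch_inf_pos (x r : R) : 0 <= x < 1 -> 0 < r < 1 -> 0 < qpoch_inf x r.
Proof.
  intros Hx Hr.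
  destruct (pow_lt_1_zero r ltac:(rewrite Rabs_pos_eq; lra) ((1 - r) / 2) ltac:(lra)) as [N HN].
  specialize (HN N (le_n N)). rewrite Rabs_pos_eq in HN by (apply pow_le; lra).
  assert (0 <= r ^ N) by (apply pow_le; lra).
  rewrite (qpoch_inf_split x r N) by lra.
  apply Rmult_lt_0_compat. apply qpoch_pos; lra.
  apply Rlt_le_trans with (1/2). lra.
  assert (Hy : 0 <= x * r ^ N <= 1) by (split; nra).
  apply qpoch_inf_ge; try lra. intros n.
  eapply Rle_trans; [|apply qpoch_lower; lra].
  assert (0 <= r ^ n <= 1) by (split; [apply pow_le; lra| apply pow_le1; lra]).
  assert (x * r ^ N * (1 - r ^ n) <= (1 - r)/2) by nra.
  apply Rle_trans with (1 - ((1 - r)/2) / (1 - r)).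
  right; field; lra.
  unfold Rdiv at 2 3. apply Rplus_le_compat_l. apply Ropp_le_contravar.
  apply Rmult_le_compat_r. left; apply Rinv_0_lt_compat; lra. lra.
Qed.


Lemma Rpower_k (q nu : R) (k : nat) : 0 < q ->
  Rpower q (2 * nu + 2 * INR k + 2) = Rpower q (2 * nu + 2) * (q ^ 2) ^ k.
Proof.
  intros Hq. replace (2 * nu + 2 * INR k + 2) with ((2 * nu + 2) + INR (2 * k)).
  rewrite Rpower_plus, Rpower_pow by auto. rewrite pow_mult. reflexivity.
  rewrite mult_INR. simpl. ring.
Qed.

Lemma b_range (q nu : R) : 0 < q < 1 -> -1 < nu -> 0 < Rpower q (2 * nu + 2) < 1.
Proof.
  intros Hq Hnu. unfold Rpower. split. apply exp_pos.
  rewrite <- exp_0. apply exp_increasing.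
  assert (ln q < 0). { rewrite <- ln_1. apply ln_increasing; lra. }
  nra.
Qed.

Definition dd (q nu : R) (k : nat) := qpoch_inf (Rpower q (2 * nu + 2 * INR k + 2)) (q ^ 2).

Lemma rho_range (q : R) : 0 < q < 1 -> 0 < q ^ 2 < 1.
Proof. intros. simpl. split; nra. Qed.

Lemma dd_shift (q nu : R) (k : nat) : 0 < q < 1 -> -1 < nu ->
  dd q nu k = (1 - Rpower q (2 * nu + 2) * (q ^ 2) ^ k) * dd q nu (S k).
Proof.
  intros Hq Hnu. unfold dd. rewrite !Rpower_k by lra.
  pose proof (b_range q nu Hq Hnu). pose proof (rho_range q Hq).
  assert (0 <= (q^2)^k <= 1) by (split; [apply pow_le; lra | apply pow_le1; lra]).
  rewrite qpoch_inf_shift. simpl. f_equal. f_equal. ring.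
  split; nra. lra.
Qed.

Lemma dd_bounds (q nu : R) (k : nat) : 0 < q < 1 -> -1 < nu -> 0 <= dd q nu k <= 1.
Proof.
  intros Hq Hnu. unfold dd. rewrite !Rpower_k by lra.
  pose proof (b_range q nu Hq Hnu). pose proof (rho_range q Hq).
  assert (0 <= (q^2)^k <= 1) by (split; [apply pow_le; lra | apply pow_le1; lra]).
  apply qpoch_inf_bounds; split; nra.
Qed.

Lemma dd0_pos (q nu : R) : 0 < q < 1 -> -1 < nu -> 0 < dd q nu 0.
Proof.
  intros Hq Hnu. unfold dd. rewrite !Rpower_k by lra.
  pose proof (b_range q nu Hq Hnu). pose proof (rho_range q Hq).
  apply qpoch_inf_pos; simpl; lra.
Qed.

Lemma Pk_lower (q : R) (k : nat) : 0 < q < 1 -> (1 - q ^ 2) ^ k <= qpoch (q ^ 2) (q ^ 2) k.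
Proof.
  intros Hq. pose proof (rho_range q Hq). induction k as [|k IH]; simpl. lra.
  assert (0 <= (q^2)^k <= 1) by (split; [apply pow_le; lra | apply pow_le1; lra]).
  assert (0 <= (1 - q^2)^k) by (apply pow_le; lra).
  assert (1 - q ^ 2 <= 1 - q ^ 2 * (q ^ 2) ^ k) by nra.
  simpl in *. rewrite Rmult_comm. apply Rmult_le_compat; lra.
Qed.

Lemma Pk_pos (q : R) (k : nat) : 0 < q < 1 -> 0 < qpoch (q ^ 2) (q ^ 2) k.
Proof.
  intros Hq. pose proof (rho_range q Hq).
  eapply Rlt_le_trans; [|apply Pk_lower; auto]. apply pow_lt. lra.
Qed.

Lemma HE_coef_eq (q nu : R) (k : nat) :
  HE_coef q nu k = (-1) ^ k * q ^ (k * (k + 1)) * dd q nu k / qpoch (q ^ 2) (q ^ 2) k.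
Proof. reflexivity. Qed.

Lemma HE_coef_rec (q nu : R) (k : nat) : 0 < q < 1 -> -1 < nu ->
  HE_coef q nu (S k) * ((1 - (q ^ 2) ^ (S k)) * (1 - Rpower q (2 * nu + 2) * (q ^ 2) ^ k))
  = - (q ^ 2) ^ (S k) * HE_coef q nu k.
Proof.
  intros Hq Hnu. rewrite !HE_coef_eq.
  rewrite (dd_shift q nu k Hq Hnu).
  assert (E : q ^ (S k * (S k + 1)) = q ^ (k * (k + 1)) * (q ^ 2) ^ (S k)).
  { rewrite <- pow_mult, <- pow_add. f_equal. nia. }
  rewrite E.
  change (qpoch (q ^ 2) (q ^ 2) (S k)) with
    (qpoch (q ^ 2) (q ^ 2) k * (1 - q ^ 2 * (q ^ 2) ^ k)).
  pose proof (Pk_pos q k Hq). pose proof (rho_range q Hq).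
  assert (0 <= (q^2)^k <= 1) by (split; [apply pow_le; lra | apply pow_le1; lra]).
  assert (1 - q ^ 2 * (q ^ 2) ^ k <> 0) by nra.
  set (r := q ^ 2) in *. set (P := qpoch r r k) in *. set (B := Rpower q (2 * nu + 2)) in *.
  change (r ^ S k) with (r * r ^ k). change ((-1) ^ S k) with (-1 * (-1) ^ k).
  field. split; lra.
Qed.

Lemma HE_coef_bound (q nu : R) (k : nat) : 0 < q < 1 -> -1 < nu ->
  Rabs (HE_coef q nu k) <= q ^ (k * (k + 1)) * (/ (1 - q ^ 2)) ^ k.
Proof.
  intros Hq Hnu. rewrite HE_coef_eq. pose proof (Pk_pos q k Hq).
  pose proof (Pk_lower q k Hq). pose proof (dd_bounds q nu k Hq Hnu).
  pose proof (rho_range q Hq).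
  assert (0 < (1 - q^2)^k) by (apply pow_lt; lra).
  assert (0 <= q ^ (k * (k+1))) by (apply pow_le; lra).
  unfold Rdiv. rewrite !Rabs_mult, Rabs_inv, pow_1_abs, (Rabs_pos_eq (q ^ _)) by auto.
  rewrite Rabs_pos_eq by lra. rewrite Rabs_pos_eq by lra. rewrite <- Rinv_pow by lra.
  rewrite Rmult_1_l, Rmult_assoc. apply Rmult_le_compat_l; auto.
  apply Rle_trans with (1 * / qpoch (q ^ 2) (q ^ 2) k).
  apply Rmult_le_compat_r. left; apply Rinv_0_lt_compat; auto. lra.
  rewrite Rmult_1_l. apply Rinv_le_contravar; auto.
Qed.

Lemma HE_coef0 (q nu : R) : HE_coef q nu 0 = dd q nu 0.
Proof. rewrite HE_coef_eq. simpl. field. Qed.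

Lemma HE_coef_sign (q nu : R) (k : nat) : 0 < q < 1 -> -1 < nu ->
  0 <= (-1) ^ k * HE_coef q nu k.
Proof.
  intros Hq Hnu. rewrite HE_coef_eq. pose proof (Pk_pos q k Hq). pose proof (dd_bounds q nu k Hq Hnu).
  assert (0 <= q ^ (k * (k+1))) by (apply pow_le; lra).
  replace ((-1) ^ k * ((-1) ^ k * q ^ (k * (k + 1)) * dd q nu k / qpoch (q ^ 2) (q ^ 2) k))
    with (((-1)^k * (-1)^k) * (q ^ (k * (k + 1)) * dd q nu k / qpoch (q ^ 2) (q ^ 2) k)) by (unfold Rdiv; ring).
  rewrite <- pow_add. replace (k + k)%nat with (2 * k)%nat by lia. rewrite pow_mult.
  replace ((-1)^2) with 1 by ring. rewrite pow1, Rmult_1_l.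
  apply Rmult_le_pos. apply Rmult_le_pos; lra. left; apply Rinv_0_lt_compat; auto.
Qed.


Definition cabs (a : nat -> C) := ex_series (fun k => Cmod (a k)).

Lemma im_le_Cmod (c : C) : Rabs (Im c) <= Cmod c.
Proof.
  destruct c as [x y]. unfold Cmod. simpl. rewrite <- sqrt_Rsqr_abs.
  apply sqrt_le_1_alt. unfold Rsqr. nra.
Qed.

Lemma exR_le (a b : nat -> R) : (forall n, Rabs (a n) <= b n) -> ex_series b -> ex_series a.
Proof. intros H Hb. apply (ex_series_le a b); auto. Qed.

Lemma cabs_re (a : nat -> C) : cabs a -> ex_series (fun k => Re (a k)).
Proof. intros H. apply exR_le with (fun k => Cmod (a k)); auto. intros; apply re_le_Cmod. Qed.

Lemma cabs_im (a : nat -> C) : cabs a -> ex_series (fun k => Im (a k)).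
Proof. intros H. apply exR_le with (fun k => Cmod (a k)); auto. intros; apply im_le_Cmod. Qed.

Lemma exR_plus (a b : nat -> R) : ex_series a -> ex_series b -> ex_series (fun n => a n + b n).
Proof. intros. apply (ex_series_plus a b); auto. Qed.

Lemma exR_scal (c : R) (a : nat -> R) : ex_series a -> ex_series (fun n => c * a n).
Proof. intros. apply (ex_series_scal_l c a); auto. Qed.

Lemma cabs_plus (a b : nat -> C) : cabs a -> cabs b -> cabs (fun n => Cplus (a n) (b n)).
Proof.
  intros Ha Hb. unfold cabs. apply exR_le with (fun n => Cmod (a n) + Cmod (b n)).
  intros n. rewrite Rabs_pos_eq by apply Cmod_ge_0. apply Cmod_triangle.
  apply exR_plus; auto.
Qed.

Lemma cabs_scal (z : C) (a : nat -> C) : cabs a -> cabs (fun n => Cmult z (a n)).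
Proof.
  intros Ha. unfold cabs. apply exR_le with (fun n => Cmod z * Cmod (a n)).
  intros n. rewrite Rabs_pos_eq by apply Cmod_ge_0. rewrite Cmod_mult. lra.
  apply exR_scal; auto.
Qed.

Lemma cabs_le (a : nat -> C) (b : nat -> R) : (forall n, Cmod (a n) <= b n) -> ex_series b -> cabs a.
Proof.
  intros H Hb. unfold cabs. apply exR_le with b; auto. intros n.
  rewrite Rabs_pos_eq by apply Cmod_ge_0. auto.
Qed.

Lemma cabs_incr (a : nat -> C) : cabs a -> cabs (fun n => a (S n)).
Proof. intros H. unfold cabs. apply (ex_series_incr_1 (fun n => Cmod (a n))). exact H. Qed.

Lemma CSeries_ext (a b : nat -> C) : (forall n, a n = b n) -> CSeries a = CSeries b.
Proof.
  intros H. unfold CSeries. f_equal; apply Series_ext; intros n; rewrite H; auto.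
Qed.

Lemma CSeries_plus (a b : nat -> C) : cabs a -> cabs b ->
  CSeries (fun n => Cplus (a n) (b n)) = Cplus (CSeries a) (CSeries b).
Proof.
  intros Ha Hb. unfold CSeries.
  change (Series (fun n => Re (Cplus (a n) (b n)))) with (Series (fun n => Re (a n) + Re (b n))).
  change (Series (fun n => Im (Cplus (a n) (b n)))) with (Series (fun n => Im (a n) + Im (b n))).
  rewrite (Series_plus (fun n => Re (a n)) (fun n => Re (b n))) by (apply cabs_re || apply cabs_im; auto).
  rewrite (Series_plus (fun n => Im (a n)) (fun n => Im (b n))) by (apply cabs_re || apply cabs_im; auto).
  reflexivity.
Qed.

Lemma CSeries_scal (z : C) (a : nat -> C) : cabs a ->
  CSeries (fun n => Cmult z (a n)) = Cmult z (CSeries a).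
Proof.
  intros Ha. pose proof (cabs_re a Ha). pose proof (cabs_im a Ha).
  unfold CSeries. destruct z as [x y]. simpl. unfold Cmult; simpl. f_equal.
  - rewrite (Series_minus (fun n => x * fst (a n)) (fun n => y * snd (a n))) by (apply exR_scal; auto).
    rewrite !Series_scal_l. reflexivity.
  - rewrite (Series_plus (fun n => x * snd (a n)) (fun n => y * fst (a n))) by (apply exR_scal; auto).
    rewrite !Series_scal_l. reflexivity.
Qed.

Lemma CSeries_incr (a : nat -> C) : cabs a ->
  CSeries a = Cplus (a 0%nat) (CSeries (fun n => a (S n))).
Proof.
  intros Ha. unfold CSeries.
  rewrite (Series_incr_1 (fun n => Re (a n))) by (apply cabs_re; auto).
  rewrite (Series_incr_1 (fun n => Im (a n))) by (apply cabs_im; auto).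
  destruct (a 0%nat). reflexivity.
Qed.

Lemma CSeries_conj (a : nat -> C) :
  CSeries (fun n => Cconj (a n)) = Cconj (CSeries a).
Proof.
  unfold CSeries, Cconj. simpl. f_equal. rewrite <- Series_opp. reflexivity.
Qed.

Lemma CSeries_bound (a : nat -> C) : cabs a ->
  Cmod (CSeries a) <= 2 * Series (fun n => Cmod (a n)).
Proof.
  intros Ha. unfold CSeries.
  assert (H1 : Rabs (Series (fun n => Re (a n))) <= Series (fun n => Cmod (a n))).
  { eapply Rle_trans. apply Series_Rabs.
    apply exR_le with (fun n => Cmod (a n)); auto. intros n; rewrite Rabs_Rabsolu; apply re_le_Cmod.
    apply Series_le; auto. intros n; split. apply Rabs_pos. apply re_le_Cmod. }
  assert (H2 : Rabs (Series (fun n => Im (a n))) <= Series (fun n => Cmod (a n))).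
  { eapply Rle_trans. apply Series_Rabs.
    apply exR_le with (fun n => Cmod (a n)); auto. intros n; rewrite Rabs_Rabsolu; apply im_le_Cmod.
    apply Series_le; auto. intros n; split. apply Rabs_pos. apply im_le_Cmod. }
  set (x := Series (fun n => Re (a n))) in *. set (y := Series (fun n => Im (a n))) in *.
  set (S := Series (fun n => Cmod (a n))) in *. unfold Cmod. simpl.
  apply Rle_trans with (Rabs x + Rabs y); [|lra].
  rewrite <- (sqrt_square (Rabs x + Rabs y)) by (pose proof (Rabs_pos x); pose proof (Rabs_pos y); lra).
  apply sqrt_le_1_alt. rewrite !Rmult_1_r.
  assert (Rabs x * Rabs x = x * x) by (rewrite <- Rabs_mult; apply Rabs_pos_eq; nra).
  assert (Rabs y * Rabs y = y * y) by (rewrite <- Rabs_mult; apply Rabs_pos_eq; nra).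
  pose proof (Rabs_pos x); pose proof (Rabs_pos y). nra.
Qed.

Lemma Series_ge_first (a : nat -> R) : ex_series a -> (forall n, 0 <= a n) -> a 0%nat <= Series a.
Proof.
  intros Ha Hp. rewrite Series_incr_1 by auto.
  assert (0 <= Series (fun k => a (S k))).
  { assert (Z : Series (fun _ : nat => 0) = 0).
    { transitivity (Series (fun _ : nat => 0 * 0)).
      apply Series_ext; intros; ring. rewrite (Series_scal_l 0 (fun _ => 0)). ring. }
    rewrite <- Z.
    apply Series_le. intros; split; [lra| auto]. apply (ex_series_incr_1 a). auto. }
  lra.
Qed.


Definition Gt (q nu : R) (z : C) (k : nat) : C := Cmult (RtoC (HE_coef q nu k)) (Cpown z k).
Definition G (q nu : R) (z : C) : C := CSeries (Gt q nu z).

Lemma Cpown_mod (z : C) (k : nat) : Cmod (Cpown z k) = Cmod z ^ k.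
Proof.
  induction k as [|k IH]; simpl. rewrite Cmod_R, Rabs_R1. auto.
  rewrite Cmod_mult, IH. ring.
Qed.

Lemma Cpown_scal (r : R) (z : C) (k : nat) :
  Cpown (Cmult (RtoC r) z) k = Cmult (RtoC (r ^ k)) (Cpown z k).
Proof.
  induction k as [|k IH]; simpl.
  - rewrite Cmult_1_l. auto.
  - rewrite IH, RtoC_mult. ring.
Qed.

Lemma Cpown_conj (z : C) (k : nat) : Cpown (Cconj z) k = Cconj (Cpown z k).
Proof.
  induction k as [|k IH]; simpl.
  - unfold Cconj, RtoC; simpl. f_equal. ring.
  - rewrite IH, Cmult_conj. auto.
Qed.

Lemma dom_series (q M : R) : 0 < q < 1 -> 0 < M ->
  ex_series (fun k => q ^ (k * (k + 1)) * M ^ k).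
Proof.
  intros Hq HM.
  assert (Hpos : forall k, 0 < q ^ (k * (k + 1)) * M ^ k).
  { intros; apply Rmult_lt_0_compat; apply pow_lt; lra. }
  apply ex_series_ext with (fun k => Rabs (q ^ (k * (k + 1)) * M ^ k)).
  { intros; apply Rabs_pos_eq; left; auto. }
  apply ex_series_DAlembert with 0. lra.
  intros n; specialize (Hpos n); lra.
  apply is_lim_seq_ext with (fun n => M * (q ^ 2) ^ (S n)).
  { intros n. rewrite Rabs_pos_eq.
    - assert (E : q ^ (S n * (S n + 1)) = q ^ (n * (n + 1)) * (q ^ 2) ^ (S n)).
      { rewrite <- pow_mult, <- pow_add. f_equal. nia. }
      rewrite E. specialize (Hpos n). simpl (M ^ S n). field.
      split; apply pow_nonzero; lra.
    - left. unfold Rdiv. apply Rmult_lt_0_compat. auto. apply Rinv_0_lt_compat; auto. }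
  replace (Finite 0) with (Rbar_mult M 0) by (simpl; f_equal; ring).
  apply is_lim_seq_scal_l.
  apply (is_lim_seq_incr_1 (fun n => (q^2)^n)).
  apply is_lim_seq_geom. pose proof (rho_range q Hq). rewrite Rabs_pos_eq; lra.
Qed.

Lemma cabs_G (q nu : R) (z : C) : 0 < q < 1 -> -1 < nu -> cabs (Gt q nu z).
Proof.
  intros Hq Hnu. pose proof (rho_range q Hq).
  set (M := Cmod z / (1 - q ^ 2) + 1).
  assert (HM : 0 < M). { unfold M. pose proof (Cmod_ge_0 z).
    assert (0 <= Cmod z / (1 - q^2)) by (apply Rmult_le_pos; [lra| left; apply Rinv_0_lt_compat; lra]). lra. }
  apply cabs_le with (fun k => q ^ (k * (k + 1)) * M ^ k).
  2: apply dom_series; auto.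
  intros n. unfold Gt. rewrite Cmod_mult, Cmod_R, Cpown_mod.
  eapply Rle_trans. apply Rmult_le_compat_r. apply pow_le, Cmod_ge_0.
  apply HE_coef_bound; auto.
  rewrite Rmult_assoc. apply Rmult_le_compat_l. apply pow_le; lra.
  rewrite <- Rpow_mult_distr. apply pow_incr. split.
  apply Rmult_le_pos. left; apply Rinv_0_lt_compat; lra. apply Cmod_ge_0.
  unfold M. unfold Rdiv. rewrite Rmult_comm. lra.
Qed.

Lemma G_conj (q nu : R) (z : C) : G q nu (Cconj z) = Cconj (G q nu z).
Proof.
  unfold G. rewrite <- CSeries_conj. apply CSeries_ext. intros n. unfold Gt.
  rewrite Cpown_conj, Cmult_conj. f_equal. unfold Cconj, RtoC; simpl. f_equal. ring.
Qed.

Lemma G_zero (q nu : R) : 0 < q < 1 -> -1 < nu -> G q nu (RtoC 0) = RtoC (dd q nu 0).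
Proof.
  intros Hq Hnu. unfold G. rewrite CSeries_incr by (apply cabs_G; auto).
  unfold Gt at 1. simpl Cpown. rewrite HE_coef0.
  assert (CSeries (fun n => Gt q nu (RtoC 0) (S n)) = RtoC 0).
  { rewrite (CSeries_ext _ (fun _ => RtoC 0)).
    2: { intros n. unfold Gt. change (Cpown (RtoC 0) (S n)) with (Cmult (Cpown (RtoC 0) n) (RtoC 0)). ring. }
    unfold CSeries. simpl.
    assert (Z : Series (fun _ : nat => 0) = 0).
    { transitivity (Series (fun _ : nat => 0 * 0)).
      apply Series_ext; intros; ring. rewrite (Series_scal_l 0 (fun _ => 0)). ring. }
    rewrite Z. reflexivity. }
  rewrite H. ring.
Qed.


Lemma Gt_rec (q nu : R) (z : C) (k : nat) : 0 < q < 1 -> -1 < nu ->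
  let r := q ^ 2 in let b := Rpower q (2 * nu + 2) in
  Cplus (Cplus (Cmult (RtoC r) (Gt q nu z (S k)))
               (Cmult (RtoC (- (r + b))) (Gt q nu (Cmult (RtoC r) z) (S k))))
        (Cmult (RtoC b) (Gt q nu (Cmult (RtoC (r * r)) z) (S k)))
  = Cmult (Copp (Cmult (RtoC (r * r)) z)) (Gt q nu (Cmult (RtoC r) z) k).
Proof.
  intros Hq Hnu r b. unfold Gt. rewrite !Cpown_scal.
  change (Cpown z (S k)) with (Cmult (Cpown z k) z).
  pose proof (HE_coef_rec q nu k Hq Hnu) as H. fold r b in H.
  set (A := HE_coef q nu (S k)) in *. set (B := HE_coef q nu k) in *.
  set (X := r ^ k) in *.
  assert (HR : r * A - (r + b) * A * r ^ S k + b * A * (r * r) ^ S k - (- (r * r) * (B * X)) = 0).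
  { rewrite Rpow_mult_distr. change (r ^ S k) with (r * X) in *. 
    replace (r * A - (r + b) * A * (r * X) + b * A * (r * X * (r * X)) - - (r * r) * (B * X))
      with (r * (A * ((1 - r * X) * (1 - b * X)) - - (r * X) * B)) by ring.
    rewrite H. ring. }
  set (P1 := r ^ S k) in *. set (P2 := (r * r) ^ S k) in *.
  set (Z := Cpown z k).
  match goal with |- ?L = ?R =>
    assert (E : Cminus L R = Cmult (RtoC (r * A - (r + b) * A * P1 + b * A * P2 - (- (r * r) * (B * X))))
                                   (Cmult Z z));
    [ | replace L with (Cplus R (Cminus L R)) by ring; rewrite E, HR; ring ] end.
  repeat (rewrite ?RtoC_minus, ?RtoC_plus, ?RtoC_mult, ?RtoC_opp).
  ring.
Qed.

Lemma G_rec (q nu : R) (z : C) : 0 < q < 1 -> -1 < nu ->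
  let r := q ^ 2 in let b := Rpower q (2 * nu + 2) in
  Cplus (Cplus (Cmult (RtoC r) (G q nu z))
               (Cmult (RtoC (- (r + b))) (G q nu (Cmult (RtoC r) z))))
        (Cmult (RtoC b) (G q nu (Cmult (RtoC (r * r)) z)))
  = Cmult (Copp (Cmult (RtoC (r * r)) z)) (G q nu (Cmult (RtoC r) z)).
Proof.
  intros Hq Hnu r b.
  set (t := fun n => Cplus (Cplus (Cmult (RtoC r) (Gt q nu z n))
               (Cmult (RtoC (- (r + b))) (Gt q nu (Cmult (RtoC r) z) n)))
        (Cmult (RtoC b) (Gt q nu (Cmult (RtoC (r * r)) z) n))).
  assert (Ht : cabs t).
  { unfold t. apply cabs_plus. apply cabs_plus. all: apply cabs_scal, cabs_G; auto. }
  assert (E1 : CSeries t = Cplus (Cplus (Cmult (RtoC r) (G q nu z))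
               (Cmult (RtoC (- (r + b))) (G q nu (Cmult (RtoC r) z))))
        (Cmult (RtoC b) (G q nu (Cmult (RtoC (r * r)) z)))).
  { unfold t, G.
    rewrite (CSeries_plus (fun n => Cplus (Cmult (RtoC r) (Gt q nu z n)) (Cmult (RtoC (-(r+b))) (Gt q nu (Cmult (RtoC r) z) n))) (fun n => Cmult (RtoC b) (Gt q nu (Cmult (RtoC (r*r)) z) n))).
    rewrite (CSeries_plus (fun n => Cmult (RtoC r) (Gt q nu z n)) (fun n => Cmult (RtoC (-(r+b))) (Gt q nu (Cmult (RtoC r) z) n))).
    rewrite (CSeries_scal (RtoC r) (Gt q nu z) (cabs_G q nu z Hq Hnu)),
      (CSeries_scal (RtoC (- (r + b))) (Gt q nu (Cmult (RtoC r) z)) (cabs_G q nu _ Hq Hnu)),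
      (CSeries_scal (RtoC b) (Gt q nu (Cmult (RtoC (r * r)) z)) (cabs_G q nu _ Hq Hnu)).
    reflexivity.
    apply cabs_scal, cabs_G; auto. apply cabs_scal, cabs_G; auto.
    apply cabs_plus; apply cabs_scal, cabs_G; auto.
    apply cabs_scal, cabs_G; auto. }
  rewrite <- E1. rewrite CSeries_incr by auto.
  assert (E0 : t 0%nat = RtoC 0).
  { unfold t, Gt. simpl Cpown. rewrite RtoC_opp, RtoC_plus. ring. }
  rewrite E0. rewrite (CSeries_ext _ (fun k => Cmult (Copp (Cmult (RtoC (r * r)) z)) (Gt q nu (Cmult (RtoC r) z) k))).
  2: { intros n. unfold t. apply Gt_rec; auto. }
  rewrite (CSeries_scal (Copp (Cmult (RtoC (r * r)) z)) (Gt q nu (Cmult (RtoC r) z)) (cabs_G q nu _ Hq Hnu)). unfold G. ring.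
Qed.

Lemma G_near0 (q nu : R) : 0 < q < 1 -> -1 < nu ->
  exists K, 0 <= K /\ forall z, Cmod z <= 1 ->
    Cmod (Cminus (G q nu z) (RtoC (dd q nu 0))) <= K * Cmod z.
Proof.
  intros Hq Hnu.
  set (a := fun n => Rabs (HE_coef q nu (S n))).
  assert (Ha : ex_series a).
  { pose proof (cabs_incr _ (cabs_G q nu (RtoC 1) Hq Hnu)) as H. unfold cabs in H.
    apply ex_series_ext with (2 := H). intros n. unfold Gt, a.
    rewrite Cmod_mult, Cmod_R, Cpown_mod, Cmod_R, Rabs_R1, pow1. apply Rmult_1_r. }
  exists (2 * Series a). split.
  { assert (0 <= Series a).
    { eapply Rle_trans; [| apply Series_ge_first; auto]. unfold a; apply Rabs_pos.
      intros; unfold a; apply Rabs_pos. }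
    lra. }
  intros z Hz.
  unfold G. rewrite CSeries_incr by (apply cabs_G; auto).
  assert (E : Gt q nu z 0 = RtoC (dd q nu 0)).
  { unfold Gt. simpl Cpown. rewrite HE_coef0. ring. }
  rewrite E.
  replace (Cminus (Cplus (RtoC (dd q nu 0)) (CSeries (fun n => Gt q nu z (S n)))) (RtoC (dd q nu 0)))
    with (CSeries (fun n => Gt q nu z (S n))) by ring.
  eapply Rle_trans. apply CSeries_bound. apply cabs_incr, cabs_G; auto.
  rewrite Rmult_assoc. apply Rmult_le_compat_l. lra.
  rewrite <- Series_scal_r.
  apply Series_le.
  2: { apply ex_series_ext with (fun n => Cmod z * a n). intros; apply Rmult_comm. apply exR_scal; auto. }
  intros n. split. apply Cmod_ge_0.
  unfold Gt, a. rewrite Cmod_mult, Cmod_R, Cpown_mod. apply Rmult_le_compat_l. apply Rabs_pos.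
  simpl. pose proof (Cmod_ge_0 z).
  assert (Cmod z ^ n <= 1) by (apply pow_le1; lra).
  assert (0 <= Cmod z ^ n) by (apply pow_le; lra). nra.
Qed.


Lemma lincomb2 (L R a1 b1 a2 b2 c1 c2 : C) : a1 = b1 -> a2 = b2 ->
  Cminus L R = Cplus (Cmult c1 (Cminus a1 b1)) (Cmult c2 (Cminus a2 b2)) -> L = R.
Proof.
  intros H1 H2 E. rewrite H1, H2 in E.
  replace L with (Cplus R (Cminus L R)) by ring. rewrite E. ring.
Qed.

Definition uu (q nu : R) (w : C) (m : nat) : C := G q nu (Cmult (RtoC ((q ^ 2) ^ m)) w).

Lemma RtoC_conj (x : R) : Cconj (RtoC x) = RtoC x.
Proof. unfold Cconj, RtoC; simpl. f_equal. ring. Qed.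

Lemma uu_conj (q nu : R) (w : C) (m : nat) : Cconj (uu q nu w m) = uu q nu (Cconj w) m.
Proof. unfold uu. rewrite <- G_conj, Cmult_conj, RtoC_conj. auto. Qed.

Lemma uu_rec (q nu : R) (w : C) (m : nat) : 0 < q < 1 -> -1 < nu ->
  let r := q ^ 2 in let b := Rpower q (2 * nu + 2) in
  Cplus (Cplus (Cmult (RtoC r) (uu q nu w m))
               (Cmult (RtoC (- (r + b))) (uu q nu w (S m))))
        (Cmult (RtoC b) (uu q nu w (S (S m))))
  = Cmult (Copp (Cmult (RtoC (r * r)) (Cmult (RtoC (r ^ m)) w))) (uu q nu w (S m)).
Proof.
  intros Hq Hnu r b. pose proof (G_rec q nu (Cmult (RtoC (r ^ m)) w) Hq Hnu) as H.
  cbv zeta in H. fold r b in H.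
  assert (E1 : Cmult (RtoC r) (Cmult (RtoC (r ^ m)) w) = Cmult (RtoC (r ^ S m)) w).
  { change (r ^ S m) with (r * r ^ m). rewrite RtoC_mult. ring. }
  assert (E2 : Cmult (RtoC (r * r)) (Cmult (RtoC (r ^ m)) w) = Cmult (RtoC (r ^ S (S m))) w).
  { change (r ^ S (S m)) with (r * (r * r ^ m)). rewrite !RtoC_mult. ring. }
  rewrite E1, E2 in H. unfold uu. fold r. rewrite E2. exact H.
Qed.

Definition DD (q nu : R) (w : C) (N : nat) : C :=
  Cminus (Cmult (uu q nu w (S N)) (Cconj (uu q nu w N)))
         (Cmult (Cconj (uu q nu w (S N))) (uu q nu w N)).

Lemma DD_key (q nu : R) (w : C) (N : nat) : 0 < q < 1 -> -1 < nu ->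
  let r := q ^ 2 in let b := Rpower q (2 * nu + 2) in
  Cminus (Cmult (RtoC b) (DD q nu w (S N))) (Cmult (RtoC r) (DD q nu w N)) =
  Cmult (Cmult (Cmult (Cminus (Cconj w) w) (RtoC (r * r))) (RtoC (r ^ N)))
        (Cmult (uu q nu w (S N)) (Cconj (uu q nu w (S N)))).
Proof.
  intros Hq Hnu r b. unfold DD. rewrite !uu_conj.
  pose proof (uu_rec q nu w N Hq Hnu) as HU. pose proof (uu_rec q nu (Cconj w) N Hq Hnu) as HV.
  cbv zeta in HU, HV. fold r b in HU, HV.
  eapply lincomb2 with (c1 := uu q nu (Cconj w) (S N)) (c2 := Copp (uu q nu w (S N))).
  exact HU. exact HV. ring.
Qed.

Fixpoint TT (q nu : R) (w : C) (N : nat) : R :=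
  match N with
  | O => 0
  | S N' => TT q nu w N' + (Rpower q (2 * nu + 2)) ^ (S N') * Cmod (uu q nu w (S N')) ^ 2
  end.

Lemma DD_ident (q nu : R) (w : C) (N : nat) : 0 < q < 1 -> -1 < nu ->
  G q nu w = RtoC 0 ->
  let r := q ^ 2 in let b := Rpower q (2 * nu + 2) in
  Cmult (RtoC (b ^ S N)) (DD q nu w N) =
  Cmult (Cmult (Cminus (Cconj w) w) (RtoC (r ^ S N))) (RtoC (TT q nu w N)).
Proof.
  intros Hq Hnu H0 r b. induction N as [|N IH].
  - unfold DD. assert (U0 : uu q nu w 0 = RtoC 0).
    { unfold uu. simpl. rewrite Cmult_1_l. auto. }
    rewrite U0. simpl TT. rewrite RtoC_conj. ring.
  - pose proof (DD_key q nu w N Hq Hnu) as K. cbv zeta in K. fold r b in K.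
    change (TT q nu w (S N)) with (TT q nu w N + b ^ (S N) * Cmod (uu q nu w (S N)) ^ 2).
    rewrite RtoC_plus, RtoC_mult, Cmod2_conj.
    replace (r ^ S (S N)) with (r * (r * r ^ N)) by (simpl; ring).
    replace (r ^ S N) with (r * r ^ N) in IH by (simpl; ring).
    replace (b ^ S (S N)) with (b * b ^ S N) by (simpl; ring).
    rewrite !RtoC_mult in *.
    eapply lincomb2 with (c1 := RtoC (b ^ S N)) (c2 := RtoC r).
    exact K. exact IH. ring.
Qed.


Lemma TT_nonneg (q nu : R) (w : C) (N : nat) : 0 < q < 1 -> -1 < nu -> 0 <= TT q nu w N.
Proof.
  intros Hq Hnu. pose proof (b_range q nu Hq Hnu).
  induction N as [|N IH]; cbn [TT]. lra.
  assert (0 <= Rpower q (2 * nu + 2) ^ S N) by (apply pow_le; lra).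
  assert (0 <= Cmod (uu q nu w (S N)) ^ 2) by (apply pow2_ge_0).
  nra.
Qed.

Lemma TT_mono (q nu : R) (w : C) (N L : nat) : 0 < q < 1 -> -1 < nu ->
  TT q nu w N <= TT q nu w (N + L).
Proof.
  intros Hq Hnu. pose proof (b_range q nu Hq Hnu).
  induction L as [|L IH]. rewrite Nat.add_0_r; lra.
  rewrite Nat.add_succ_r. cbn [TT].
  assert (0 <= Rpower q (2 * nu + 2) ^ S (N + L)) by (apply pow_le; lra).
  assert (0 <= Cmod (uu q nu w (S (N + L))) ^ 2) by (apply pow2_ge_0).
  nra.
Qed.

Lemma Cmod_minus_le (x y : C) : Cmod (Cminus x y) <= Cmod x + Cmod y.
Proof.
  unfold Cminus. eapply Rle_trans. apply Cmod_triangle. rewrite Cmod_opp. lra.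
Qed.

Lemma nonreal_contra (q nu : R) (w : C) : 0 < q < 1 -> -1 < nu ->
  G q nu w = RtoC 0 -> Im w <> 0 -> False.
Proof.
  intros Hq Hnu H0 Him.
  set (r := q ^ 2). set (b := Rpower q (2 * nu + 2)).
  pose proof (rho_range q Hq) as Hr. fold r in Hr.
  pose proof (b_range q nu Hq Hnu) as Hb. fold b in Hb.
  set (g0 := dd q nu 0).
  assert (Hg0 : 0 < g0 <= 1).
  { split. apply dd0_pos; auto. apply (dd_bounds q nu 0 Hq Hnu). }
  destruct (G_near0 q nu Hq Hnu) as [K [HK HKb]].
  set (W := Cmod w). assert (HW : 0 <= W) by apply Cmod_ge_0.
  assert (Hu : forall m, r ^ m * W <= 1 ->
            Cmod (Cminus (uu q nu w m) (RtoC g0)) <= K * (r ^ m * W)).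
  { intros m Hm. unfold uu. fold r.
    assert (Cmod (Cmult (RtoC (r ^ m)) w) = r ^ m * W).
    { rewrite Cmod_mult, Cmod_R, Rabs_pos_eq. auto. apply pow_le; lra. }
    rewrite <- H. apply HKb. rewrite H. auto. }
  set (eps := g0 / ((2 * K + 2) * (W + 1))).
  assert (Heps : 0 < eps).
  { unfold eps. apply Rmult_lt_0_compat. lra. apply Rinv_0_lt_compat. nra. }
  destruct (pow_lt_1_zero r ltac:(rewrite Rabs_pos_eq; lra) eps Heps) as [M0 HM0].
  set (M := S M0).
  assert (Hsmall : forall n, (n >= M)%nat -> r ^ n * W <= 1 /\ K * (r ^ n * W) <= g0 / 2).
  { intros n Hn. specialize (HM0 n ltac:(unfold M in Hn; lia)).
    rewrite Rabs_pos_eq in HM0 by (apply pow_le; lra).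
    assert (0 <= r ^ n) by (apply pow_le; lra).
    assert (E1 : eps * ((2 * K + 2) * (W + 1)) = g0).
    { unfold eps. field. split; nra. }
    assert (r ^ n * ((2 * K + 2) * (W + 1)) <= g0) by nra.
    split; nra. }
  assert (Hub : forall n, (n >= M)%nat ->
            Cmod (Cminus (uu q nu w n) (RtoC g0)) <= K * (r ^ n * W)
            /\ g0 / 2 <= Cmod (uu q nu w n) /\ Cmod (uu q nu w n) <= 2).
  { intros n Hn. destruct (Hsmall n Hn) as [A1 A2]. pose proof (Hu n A1) as A3.
    split; auto.
    assert (E : uu q nu w n = Cplus (RtoC g0) (Cminus (uu q nu w n) (RtoC g0))) by ring.
    pose proof (Cmod_triangle (RtoC g0) (Cminus (uu q nu w n) (RtoC g0))).
    assert (E2 : RtoC g0 = Cminus (uu q nu w n) (Cminus (uu q nu w n) (RtoC g0))) by ring.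
    pose proof (Cmod_minus_le (uu q nu w n) (Cminus (uu q nu w n) (RtoC g0))).
    rewrite <- E2 in H1. rewrite <- E in H.
    rewrite Cmod_R, Rabs_pos_eq in H, H1 by lra. split; lra. }
  assert (HD : forall N, (N >= M)%nat -> Cmod (DD q nu w N) <= 8 * K * W * r ^ N).
  { intros N HN.
    destruct (Hub N HN) as [B1 [B2 B3]]. destruct (Hub (S N) ltac:(lia)) as [C1 [C2 C3]].
    set (u0 := uu q nu w N) in *. set (u1 := uu q nu w (S N)) in *.
    assert (E : DD q nu w N = Cminus (Cmult (Cminus u1 u0) (Cconj u0)) (Cmult (Cconj (Cminus u1 u0)) u0)).
    { unfold DD. fold u0 u1. rewrite Cminus_conj. ring. }
    assert (Hd : Cmod (Cminus u1 u0) <= 2 * K * W * r ^ N).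
    { replace (Cminus u1 u0) with (Cminus (Cminus u1 (RtoC g0)) (Cminus u0 (RtoC g0))) by ring.
      eapply Rle_trans. apply Cmod_minus_le.
      assert (r ^ S N <= r ^ N). { simpl. assert (0 <= r ^ N) by (apply pow_le; lra). nra. }
      assert (K * (r ^ S N * W) <= K * (r ^ N * W)).
      { apply Rmult_le_compat_l; auto. apply Rmult_le_compat_r; auto. }
      nra. }
    rewrite E. eapply Rle_trans. apply Cmod_minus_le.
    rewrite !Cmod_mult, Cmod_conj, Cmod_conj.
    pose proof (Cmod_ge_0 (Cminus u1 u0)). pose proof (Cmod_ge_0 u0). nra. }
  assert (Hci : 0 < Cmod (Cminus (Cconj w) w)).
  { destruct (Cmod_ge_0 (Cminus (Cconj w) w)) as [h|h]; auto.
    exfalso. symmetry in h. apply Cmod_eq_0 in h.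
    apply Him. destruct w as [x y]. unfold Cminus, Cconj, Cplus, Copp in h. simpl in h.
    injection h. intros. simpl. lra. }
  set (ci := Cmod (Cminus (Cconj w) w)) in *.
  assert (HT : forall N, (N >= M)%nat -> ci * r ^ S N * TT q nu w N <= b ^ S N * (8 * K * W * r ^ N)).
  { intros N HN. pose proof (DD_ident q nu w N Hq Hnu H0) as I. cbv zeta in I. fold r b in I.
    apply (f_equal Cmod) in I. rewrite !Cmod_mult, !Cmod_R in I.
    rewrite (Rabs_pos_eq (b ^ S N)) in I by (apply pow_le; lra).
    rewrite (Rabs_pos_eq (r ^ S N)) in I by (apply pow_le; lra).
    rewrite (Rabs_pos_eq (TT q nu w N)) in I by (apply TT_nonneg; auto).
    fold ci in I. rewrite <- I. apply Rmult_le_compat_l. apply pow_le; lra. apply HD; auto. }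
  assert (HTM : b ^ M * (g0 / 2) ^ 2 <= TT q nu w M).
  { unfold M. cbn [TT]. fold b. pose proof (TT_nonneg q nu w M0 Hq Hnu).
    destruct (Hub M (le_n M)) as [_ [L1 _]]. unfold M in L1.
    assert (0 <= b ^ S M0) by (apply pow_le; lra).
    assert ((g0 / 2) ^ 2 <= Cmod (uu q nu w (S M0)) ^ 2).
    { apply pow_incr. split; lra. }
    nra. }
  set (C0 := 8 * K * W / (ci * r)).
  assert (HC0 : 0 <= C0).
  { unfold C0. apply Rmult_le_pos. nra. left. apply Rinv_0_lt_compat. nra. }
  assert (Hall : forall L, (g0 / 2) ^ 2 <= b ^ S L * C0).
  { intros L. pose proof (HT (M + L)%nat ltac:(lia)) as T1.
    pose proof (TT_mono q nu w M L Hq Hnu) as T2.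
    assert (Hbm : 0 < b ^ M) by (apply pow_lt; lra).
    assert (Hrn : 0 < r ^ (M + L)) by (apply pow_lt; lra).
    replace (b ^ S (M + L)) with (b ^ M * b ^ S L) in T1 by (rewrite <- pow_add; f_equal; lia).
    change (r ^ S (M + L)) with (r * r ^ (M + L)) in T1.
    assert (T3 : ci * r * r ^ (M + L) * (b ^ M * (g0 / 2) ^ 2) <= ci * r * r ^ (M + L) * (b ^ M * b ^ S L * C0)).
    { eapply Rle_trans. apply Rmult_le_compat_l. left; apply Rmult_lt_0_compat; auto; apply Rmult_lt_0_compat; lra. eapply Rle_trans. exact HTM. exact T2.
      replace (ci * r * r ^ (M + L) * (b ^ M * b ^ S L * C0)) with (b ^ M * b ^ S L * (8 * K * W * r ^ (M + L))).
      lra. unfold C0. field. split; lra. }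
    assert (T4 : b ^ M * (g0 / 2) ^ 2 <= b ^ M * (b ^ S L * C0)).
    { apply Rmult_le_reg_l with (ci * r * r ^ (M + L)). apply Rmult_lt_0_compat; auto. nra.
      rewrite <- Rmult_assoc in T3 |- *. lra. }
    apply Rmult_le_reg_l with (b ^ M); auto. }
  assert (Hy : 0 < (g0 / 2) ^ 2 / (C0 + 1)).
  { apply Rmult_lt_0_compat. apply pow_lt; lra. apply Rinv_0_lt_compat; lra. }
  destruct (pow_lt_1_zero b ltac:(rewrite Rabs_pos_eq; lra) _ Hy) as [L HL].
  specialize (HL (S L) ltac:(lia)). rewrite Rabs_pos_eq in HL by (apply pow_le; lra).
  specialize (Hall L).
  assert (b ^ S L * C0 <= (g0 / 2) ^ 2 / (C0 + 1) * C0) by (apply Rmult_le_compat_r; lra).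
  assert ((g0 / 2) ^ 2 / (C0 + 1) * C0 < (g0 / 2) ^ 2).
  { assert (0 < (g0/2)^2) by (apply pow_lt; lra).
    apply Rmult_lt_reg_r with (C0 + 1). lra.
    replace ((g0 / 2) ^ 2 / (C0 + 1) * C0 * (C0 + 1)) with ((g0/2)^2 * C0) by (field; lra). nra. }
  lra.
Qed.


Lemma Cpown_2k (a : C) (k : nat) : Cpown a (2 * k) = Cpown (Cmult a a) k.
Proof.
  induction k as [|k IH]. reflexivity.
  replace (2 * S k)%nat with (S (S (2 * k))) by lia.
  change (Cpown a (S (S (2 * k)))) with (Cmult (Cmult (Cpown a (2 * k)) a) a).
  rewrite IH. simpl. ring.
Qed.

Lemma Cpown_R (x : R) (k : nat) : Cpown (RtoC x) k = RtoC (x ^ k).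
Proof.
  induction k as [|k IH]. reflexivity.
  simpl. rewrite IH, <- RtoC_mult. f_equal. ring.
Qed.

Lemma cpow_nz (x : C) (nu : R) : cpow_real x nu <> RtoC 0.
Proof.
  unfold cpow_real, RtoC. intros H. injection H. intros H1 H2.
  pose proof (exp_pos (nu * ln (Cmod x))).
  assert (cos (nu * Arg x) = 0) by (apply Rmult_eq_reg_l with (exp (nu * ln (Cmod x))); lra).
  assert (sin (nu * Arg x) = 0) by (apply Rmult_eq_reg_l with (exp (nu * ln (Cmod x))); lra).
  pose proof (sin2_cos2 (nu * Arg x)). unfold Rsqr in H5. rewrite H3, H4 in H5. lra.
Qed.

Lemma HEJ_G (q nu : R) (a : C) :
  HEJ q nu a = Cmult (Cmult (cpow_real a nu) (RtoC (/ qpoch_inf (q ^ 2) (q ^ 2)))) (G q nu (Cmult a a)).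
Proof.
  unfold HEJ, G. f_equal. apply CSeries_ext. intros k. unfold Gt. rewrite Cpown_2k. reflexivity.
Qed.

Lemma neg_real_G (q nu t : R) : 0 < q < 1 -> -1 < nu -> 0 < Re (G q nu (RtoC (- t))) \/ t < 0.
Proof.
  intros Hq Hnu. destruct (Rlt_or_le t 0) as [ht|ht]; [right; auto| left].
  unfold G, CSeries. simpl fst.
  pose proof (cabs_re _ (cabs_G q nu (RtoC (- t)) Hq Hnu)) as Hex.
  eapply Rlt_le_trans; [| apply Series_ge_first; auto].
  - unfold Gt. simpl Cpown. rewrite Cmult_1_r. simpl. rewrite HE_coef0. apply dd0_pos; auto.
  - intros n. unfold Gt. rewrite Cpown_R, <- RtoC_mult. simpl.
    replace ((- t) ^ n) with ((-1) ^ n * t ^ n) by (rewrite <- Rpow_mult_distr; f_equal; ring).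
    replace (HE_coef q nu n * ((-1) ^ n * t ^ n)) with (((-1) ^ n * HE_coef q nu n) * t ^ n) by ring.
    apply Rmult_le_pos. apply HE_coef_sign; auto. apply pow_le; auto.
Qed.

Theorem corollary3p2 (q nu : R) (a : C) :
  0 < q < 1 -> -1 < nu -> a <> RtoC 0 -> HEJ q nu a = RtoC 0 -> Im a = 0.
Proof.
  intros Hq Hnu Ha H.
  rewrite HEJ_G in H.
  assert (Hc : RtoC (/ qpoch_inf (q ^ 2) (q ^ 2)) <> RtoC 0).
  { pose proof (rho_range q Hq). pose proof (qpoch_inf_pos (q^2) (q^2) ltac:(lra) H0).
    intros E. injection E. apply (Rinv_neq_0_compat (qpoch_inf (q^2) (q^2))). lra. }
  assert (HG : G q nu (Cmult a a) = RtoC 0).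
  { set (x := Cmult (cpow_real a nu) (RtoC (/ qpoch_inf (q ^ 2) (q ^ 2)))) in H.
    assert (Hx : x <> RtoC 0) by (apply Cmult_neq_0; [apply cpow_nz | auto]).
    replace (G q nu (Cmult a a)) with (Cmult (Cinv x) (Cmult x (G q nu (Cmult a a)))).
    rewrite H. ring. field. auto. }
  destruct (Req_dec (Im (Cmult a a)) 0) as [Hw|Hw].
  2: { exfalso. apply (nonreal_contra q nu (Cmult a a)); auto. }
  destruct (Req_dec (Im a) 0) as [Hi|Hi]; auto. exfalso.
  destruct a as [x y]. simpl in Hw, Hi.
  assert (Hx : x = 0) by (apply Rmult_eq_reg_l with y; nra).
  subst x.
  assert (E : Cmult (0, y) (0, y) = RtoC (- (y * y))).
  { unfold Cmult, RtoC. simpl. f_equal; ring. }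
  rewrite E in HG.
  destruct (neg_real_G q nu (y * y) Hq Hnu) as [Hp|Hp].
  - rewrite HG in Hp. simpl in Hp. lra.
  - nra.
Qed.
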